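(* Let $b>0$ and let $h,k\in\mathbb{R}$ satisfy $k\geqslant 4bh-b^2$ and $k\geqslant 2b$. Along any solution of the equations of motion lying on the common level set $\{H=h,\ K=k\}\subset\mathcal{P}^4$ (with $r_3\neq0$), the separation variables $x(t),y(t)$ satisfy, for appropriate branches of the square roots, $$(x-y)\frac{dx}{dt}=-\frac{1}{\sqrt b}\sqrt{-W(x)},\qquad (x-y)\frac{dy}{dt}=\frac{1}{\sqrt b}\sqrt{-W(y)},$$ where $$W(s)=(s^2-k-2b)(s^2-k+2b)(s^2-2bs+4bh-k).$$ Equivalently, $\dfrac{dx}{\sqrt{-W(x)}}+\dfrac{dy}{\sqrt{-W(y)}}=0$ and $\dfrac{x\,dx}{\sqrt{-W(x)}}+\dfrac{y\,dy}{\sqrt{-W(y)}}=-\dfrac{dt}{\sqrt b}$.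
   Context: Goryachev's integrable case of rigid body dynamics (with the normalization $c=1$). On $\mathbb{R}^6$ with coordinates $\mathbf{s}=(s_1,s_2,s_3)$, $\mathbf{r}=(r_1,r_2,r_3)$, take the Poisson brackets $\{s_i,s_j\}=-\varepsilon_{ijk}s_k$, $\{s_i,r_j\}=-\varepsilon_{ijk}r_k$, $\{r_i,r_j\}=0$, and the Hamiltonian $$H=\tfrac12(s_1^2+s_2^2+2s_3^2)+\tfrac12\Big[(r_1^2-r_2^2)+\frac{b}{r_3^2}\Big],$$ $b$ a real parameter. The equations of motion are $\dot s_1=s_2s_3+r_2r_3-b\,r_2/r_3^3$, $\dot s_2=-s_1s_3+r_1r_3+b\,r_1/r_3^2$, $\dot s_3=-2r_1r_2$, $\dot r_1=2s_3r_2-s_2r_3$, $\dot r_2=-2s_3r_1+s_1r_3$, $\dot r_3=s_2r_1-s_1r_2$. The Casimir functions are $\Gamma=r_1^2+r_2^2+r_3^2$, $L=s_1r_1+s_2r_2+s_3r_3$, and $\mathcal{P}^4=\{(\mathbf{s},\mathbf{r}):\Gamma=1,\ L=0\}$. The additional first integral on $\mathcal{P}^4$ is $$K=\Big(s_1^2+s_2^2+\frac{b}{r_3^2}\Big)^2+2r_3^2(s_1^2-s_2^2)+r_3^4.$$ Separation variables: put $z=r_3^2$, $u=s_1^2+s_2^2+b/r_3^2$; then $x,y$ are the two roots of $s^2-\frac{2b}{z}s+\left(\frac{2bu}{z}-k\right)=0$, so that $z=\frac{2b}{x+y}$, $u=\frac{xy+k}{x+y}$. *)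

(* Defs.v *)
From Stdlib Require Import Reals.
Open Scope R_scope.

(* Hamiltonian H of Goryachev's case (c = 1). *)
Definition Ham (b s1 s2 s3 r1 r2 r3 : R) : R :=
  / 2 * (s1 ^ 2 + s2 ^ 2 + 2 * s3 ^ 2) + / 2 * ((r1 ^ 2 - r2 ^ 2) + b / r3 ^ 2).

Definition Kint (b s1 s2 r3 : R) : R :=
  (s1 ^ 2 + s2 ^ 2 + b / r3 ^ 2) ^ 2 + 2 * r3 ^ 2 * (s1 ^ 2 - s2 ^ 2) + r3 ^ 4.

Definition Gam (r1 r2 r3 : R) : R := r1 ^ 2 + r2 ^ 2 + r3 ^ 2.
Definition Lcas (s1 s2 s3 r1 r2 r3 : R) : R := s1 * r1 + s2 * r2 + s3 * r3.

Definition Wpoly (b h k s : R) : R :=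
  (s ^ 2 - k - 2 * b) * (s ^ 2 - k + 2 * b) * (s ^ 2 - 2 * b * s + 4 * b * h - k).

Definition is_solution (b a c : R) (s1 s2 s3 r1 r2 r3 : R -> R) : Prop :=
  forall t, a < t < c ->
    derivable_pt_lim s1 t (s2 t * s3 t + r2 t * r3 t - b * r2 t / r3 t ^ 3) /\
    derivable_pt_lim s2 t (- s1 t * s3 t + r1 t * r3 t + b * r1 t / r3 t ^ 3) /\
    derivable_pt_lim s3 t (- 2 * r1 t * r2 t) /\
    derivable_pt_lim r1 t (2 * s3 t * r2 t - s2 t * r3 t) /\
    derivable_pt_lim r2 t (- 2 * s3 t * r1 t + s1 t * r3 t) /\
    derivable_pt_lim r3 t (s2 t * r1 t - s1 t * r2 t).

(* Main.v *)
Require Import Defs.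
From Stdlib Require Import Reals Lra Psatz.
Open Scope R_scope.


Lemma deriv_zero_local (f : R -> R) a c t l : a < t < c ->
  (forall s, a < s < c -> f s = 0) -> derivable_pt_lim f t l -> l = 0.
Proof.
  intros Ht Hz Hd.
  destruct (Req_dec l 0) as [|Hl]; auto. exfalso.
  destruct (Hd (Rabs l)) as [d Hdd]. apply Rabs_pos_lt; auto.
  set (hh := Rmin d (Rmin (t-a) (c-t)) / 2).
  assert (Hm : 0 < Rmin d (Rmin (t-a) (c-t))).
  { destruct d as [d dp]; simpl. repeat apply Rmin_pos; lra. }
  assert (H1 : Rmin d (Rmin (t-a) (c-t)) <= d) by apply Rmin_l.
  assert (H2 : Rmin d (Rmin (t-a) (c-t)) <= t - a) by (eapply Rle_trans; [apply Rmin_r|apply Rmin_l]).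
  assert (H3 : Rmin d (Rmin (t-a) (c-t)) <= c - t) by (eapply Rle_trans; [apply Rmin_r|apply Rmin_r]).
  assert (Hh0 : hh <> 0) by (unfold hh; lra).
  specialize (Hdd hh Hh0).
  rewrite (Hz t Ht), (Hz (t+hh)) in Hdd by (unfold hh; lra).
  assert (Rabs hh < d) by (rewrite Rabs_right; unfold hh; lra).
  specialize (Hdd H).
  replace ((0 - 0) / hh - l) with (- l) in Hdd by (field; auto).
  rewrite Rabs_Ropp in Hdd. lra.
Qed.

Lemma dmul (f g : R -> R) t a b : derivable_pt_lim f t a -> derivable_pt_lim g t b ->
  derivable_pt_lim (fun s => f s * g s) t (a * g t + f t * b).
Proof. intros; apply (derivable_pt_lim_mult f g); auto. Qed.
Lemma dplus (f g : R -> R) t a b : derivable_pt_lim f t a -> derivable_pt_lim g t b ->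
  derivable_pt_lim (fun s => f s + g s) t (a + b).
Proof. intros; apply (derivable_pt_lim_plus f g); auto. Qed.
Lemma dminus (f g : R -> R) t a b : derivable_pt_lim f t a -> derivable_pt_lim g t b ->
  derivable_pt_lim (fun s => f s - g s) t (a - b).
Proof. intros; apply (derivable_pt_lim_minus f g); auto. Qed.
Lemma dconst (c0 t : R) : derivable_pt_lim (fun _ => c0) t 0.
Proof. apply derivable_pt_lim_const. Qed.

Lemma sign_lemma b G W : 0 < b -> b * G^2 = W ->
  0 <= W /\ exists e, (e = 1 \/ e = -1) /\ G = (1 / sqrt b) * (e * sqrt W).
Proof.
  intros hb HW. subst W. split. { apply Rmult_le_pos; [lra| apply pow2_ge_0]. }
  assert (Hsb : 0 < sqrt b) by (apply sqrt_lt_R0; auto).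
  rewrite sqrt_mult_alt by lra.
  destruct (Rle_or_lt 0 G).
  - exists 1. split; [auto|]. rewrite sqrt_pow2 by auto. field. lra.
  - exists (-1). split; [auto|]. replace (G^2) with ((-G)^2) by ring.
    rewrite sqrt_pow2 by lra. field. lra.
Qed.

Lemma poly_id s1 s2 r1 r2 v z p q m n l : z = 1 - r1^2 - r2^2 ->
 p = s1^2+s2^2 -> q = s1^2 - s2^2 -> m = s2*r1 - s1*r2 -> n = s1*r2+s2*r1 -> l = s1*r1+s2*r2 ->
 (p*v+z*q)*(v*(r1^2+r2^2) - 2*l^2 - z*(r1^2-r2^2)) - (m*v - z*n)^2 = l^2 * (v^2 - 2*p*v - 2*z*q - z^2).
Proof. intros -> -> -> -> -> ->. ring. Qed.

Lemma key (b h k s1 s2 s3 r1 r2 r3 x y dx dy : R) :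
  0 < b -> r3 <> 0 ->
  r1^2 + r2^2 + r3^2 = 1 ->
  s1*r1 + s2*r2 + s3*r3 = 0 ->
  / 2 * (s1 ^ 2 + s2 ^ 2 + 2 * s3 ^ 2) + / 2 * ((r1 ^ 2 - r2 ^ 2) + b / r3 ^ 2) = h ->
  (s1 ^ 2 + s2 ^ 2 + b / r3 ^ 2) ^ 2 + 2 * r3 ^ 2 * (s1 ^ 2 - s2 ^ 2) + r3 ^ 4 = k ->
  x + y = 2 * b / r3^2 ->
  x * y = 2 * b * (s1 ^ 2 + s2 ^ 2 + b / r3^2) / r3^2 - k ->
  r3^2*(dx+dy) + 2*r3*(s2*r1 - s1*r2)*(x+y) = 0 ->
  r3^4 * (dx*y + x*dy) + (4*r3^3*(s2*r1 - s1*r2)*(x*y)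
     - 2*b*(2*r3*(s2*r1 - s1*r2)*(s1^2+s2^2) + r3^2*
        (2*s1*(s2*s3 + r2*r3 - b*r2/r3^3) + 2*s2*(-s1*s3 + r1*r3 + b*r1/r3^3)))
     + 4*k*r3^3*(s2*r1 - s1*r2)) = 0 ->
  b * ((x - y) * dx)^2 = - ((x ^ 2 - k - 2 * b) * (x ^ 2 - k + 2 * b) * (x ^ 2 - 2 * b * x + 4 * b * h - k)).
Proof.
  intros hb hr3 hG hL hH hK hS hP E1 E2.
  set (m := s2*r1 - s1*r2) in *.
  set (n := s1*r2 + s2*r1).
  set (p := s1^2+s2^2) in *.
  set (q := s1^2-s2^2) in *.
  set (l := s1*r1+s2*r2).
  set (u := p + b/r3^2).
  set (v := u - x).
  set (z := r3^2).
  assert (hs3 : s3 = - l / r3).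
  { replace s3 with (s3*r3/r3) by (field; auto). replace (s3*r3) with (-l) by (unfold l; lra). reflexivity. }
  assert (S1 : dx + dy = -4*b*m/r3^3).
  { apply (Rmult_eq_reg_l (r3^2)); [| apply pow_nonzero; auto].
    replace (r3^2*(dx+dy)) with (-(2*r3*m*(x+y))) by lra.
    rewrite hS. field. auto. }
  assert (S2 : dx*y + x*dy = 4*b*n/r3 - 4*b*u*m/r3^3).
  { rewrite hP in E2.
    apply (Rmult_eq_reg_l (r3^4)); [| apply pow_nonzero; auto].
    match type of E2 with ?A + ?B = 0 => replace A with (-B) by lra end.
    unfold n, u. subst p. rewrite hs3. unfold m, l. field. auto. }
  assert (G : (x - y) * dx = 4*b/r3^3 * (m*v - z*n)).
  { replace ((x-y)*dx) with (x*(dx+dy) - (dx*y + x*dy)) by ring.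
    rewrite S1, S2. unfold v, z. field. auto. }
  assert (Hx2 : x^2 - k = -2*b*v/z).
  { replace (x^2) with ((x+y)*x - x*y) by ring. rewrite hS, hP.
    unfold v, u, z. field. auto. }
  assert (Hk : k = u^2 + 2*z*q + z^2).
  { rewrite <- hK. unfold u, z. ring. }
  assert (Qv : v^2 - 2*p*v - 2*z*q - z^2 = 0).
  { replace (v^2 - 2*p*v - 2*z*q - z^2) with (x^2 - k + 2*b*v/z).
    - rewrite Hx2. field. unfold z. apply pow_nonzero; auto.
    - rewrite Hk. unfold v, u, z. field. auto. }
  assert (Hh : z*(u - 2*h) = -2*l^2 - z*(r1^2 - r2^2)).
  { rewrite <- hH. rewrite hs3. unfold u, z. subst p. field. auto. }
  assert (Hz : z = 1 - r1^2 - r2^2) by (unfold z; lra).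
  assert (T : 2*(m*v - z*n)^2 = (v^2 - z^2)*(v*(1-z) + z*(u-2*h))).
  { pose proof (poly_id s1 s2 r1 r2 v z p q m n l Hz eq_refl eq_refl eq_refl eq_refl eq_refl) as PI.
    assert (Hvz : v^2 - z^2 = 2*(p*v + z*q)) by lra.
    assert (Hlin : v*(1-z) + z*(u-2*h) = v*(r1^2+r2^2) - 2*l^2 - z*(r1^2-r2^2)).
    { rewrite Rmult_minus_distr_l, Hh. rewrite Hz at 1. ring. }
    rewrite Hvz, Hlin. rewrite Qv in PI. lra. }
  rewrite G.
  replace (x ^ 2 - k - 2 * b) with (x^2 - k - 2*b) by ring.
  replace (x ^ 2 - 2 * b * x + 4 * b * h - k) with ((x^2 - k) - 2*b*x + 4*b*h) by ring.
  replace (x ^ 2 - k + 2 * b) with ((x^2 - k) + 2*b) by ring.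
  rewrite Hx2.
  transitivity (8*b^3/r3^6 * (2*(m*v - z*n)^2)).
  - field. auto.
  - rewrite T. unfold v, z. field. auto.
Qed.

Ltac dtac := repeat first [apply dconst | apply dminus | apply dplus | apply dmul | eassumption].

Theorem theorem2 (b h k : R) (hb : 0 < b)
  (hk1 : k >= 4 * b * h - b ^ 2) (hk2 : k >= 2 * b)
  (a c : R) (s1 s2 s3 r1 r2 r3 x y dx dy : R -> R)
  (hsol : is_solution b a c s1 s2 s3 r1 r2 r3)
  (hr3 : forall t, a < t < c -> r3 t <> 0)
  (hG : forall t, a < t < c -> Gam (r1 t) (r2 t) (r3 t) = 1)
  (hL : forall t, a < t < c -> Lcas (s1 t) (s2 t) (s3 t) (r1 t) (r2 t) (r3 t) = 0)
  (hH : forall t, a < t < c -> Ham b (s1 t) (s2 t) (s3 t) (r1 t) (r2 t) (r3 t) = h)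
  (hK : forall t, a < t < c -> Kint b (s1 t) (s2 t) (r3 t) = k)
  (* x t, y t are the two roots of s^2 - (2b/z) s + (2bu/z - k) = 0 *)
  (hxy : forall t, a < t < c ->
     let z := r3 t ^ 2 in
     let u := s1 t ^ 2 + s2 t ^ 2 + b / z in
     x t + y t = 2 * b / z /\ x t * y t = 2 * b * u / z - k)
  (hdx : forall t, a < t < c -> derivable_pt_lim x t (dx t))
  (hdy : forall t, a < t < c -> derivable_pt_lim y t (dy t)) :
  forall t, a < t < c ->
    exists e1 e2 : R, (e1 = 1 \/ e1 = -1) /\ (e2 = 1 \/ e2 = -1) /\
      0 <= - Wpoly b h k (x t) /\ 0 <= - Wpoly b h k (y t) /\
      (x t - y t) * dx t = - (1 / sqrt b) * (e1 * sqrt (- Wpoly b h k (x t))) /\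
      (x t - y t) * dy t = (1 / sqrt b) * (e2 * sqrt (- Wpoly b h k (y t))).
Proof.
  intros t Ht.
  destruct (hsol t Ht) as (ds1 & ds2 & ds3 & dr1 & dr2 & dr3).
  pose proof (hdx t Ht) as ddx. pose proof (hdy t Ht) as ddy.
  pose proof (hr3 t Ht) as hr.
  pose proof (hxy t Ht) as HXY; cbv zeta in HXY; destruct HXY as [hS hP].
  eassert (D1 : derivable_pt_lim (fun s => r3 s * r3 s * (x s + y s) - 2*b) t ?[l1]) by dtac.
  apply deriv_zero_local with (a := a) (c := c) in D1; auto.
  2:{ intros s Hs. destruct (hxy s Hs) as [hS' _]. rewrite hS'. field. apply hr3; auto. }
  assert (E1 : r3 t^2*(dx t+dy t) + 2*r3 t*(s2 t*r1 t - s1 t*r2 t)*(x t+y t) = 0)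
    by (rewrite <- D1; ring).
  eassert (D2 : derivable_pt_lim (fun s => r3 s*r3 s*r3 s*r3 s*(x s*y s)
     - (2*b*(r3 s*r3 s)*(s1 s*s1 s + s2 s*s2 s) + 2*b*b - k*(r3 s*r3 s*r3 s*r3 s))) t ?[l2]) by dtac.
  apply deriv_zero_local with (a := a) (c := c) in D2; auto.
  2:{ intros s Hs. destruct (hxy s Hs) as [_ hP']. rewrite hP'. field. apply hr3; auto. }
  assert (E2 : r3 t^4 * (dx t*y t + x t*dy t) + (4*r3 t^3*(s2 t*r1 t - s1 t*r2 t)*(x t*y t)
     - 2*b*(2*r3 t*(s2 t*r1 t - s1 t*r2 t)*(s1 t^2+s2 t^2) + r3 t^2*
        (2*s1 t*(s2 t*s3 t + r2 t*r3 t - b*r2 t/r3 t^3) + 2*s2 t*(-s1 t*s3 t + r1 t*r3 t + b*r1 t/r3 t^3)))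
     + 4*k*r3 t^3*(s2 t*r1 t - s1 t*r2 t)) = 0)
    by (rewrite <- D2; ring).
  pose proof (hG t Ht) as g. pose proof (hL t Ht) as lL. pose proof (hH t Ht) as hh.
  pose proof (hK t Ht) as kk. unfold Gam, Lcas, Ham, Kint in *.
  assert (g' : r1 t ^ 2 + r2 t ^ 2 + r3 t ^ 2 = 1) by (rewrite <- g; ring).
  assert (lL' : s1 t * r1 t + s2 t * r2 t + s3 t * r3 t = 0) by (rewrite <- lL; ring).
  pose proof (key b h k (s1 t) (s2 t) (s3 t) (r1 t) (r2 t) (r3 t) (x t) (y t) (dx t) (dy t)
     hb hr g' lL' hh kk hS hP E1 E2) as Kx.
  assert (hS2 : y t + x t = 2 * b / r3 t ^ 2) by (rewrite <- hS; ring).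
  assert (hP2 : y t * x t = 2 * b * (s1 t ^ 2 + s2 t ^ 2 + b / r3 t ^ 2) / r3 t ^ 2 - k) by (rewrite <- hP; ring).
  assert (E1' : r3 t^2*(dy t+dx t) + 2*r3 t*(s2 t*r1 t - s1 t*r2 t)*(y t+x t) = 0)
    by (rewrite <- E1; ring).
  assert (E2' : r3 t^4 * (dy t*x t + y t*dx t) + (4*r3 t^3*(s2 t*r1 t - s1 t*r2 t)*(y t*x t)
     - 2*b*(2*r3 t*(s2 t*r1 t - s1 t*r2 t)*(s1 t^2+s2 t^2) + r3 t^2*
        (2*s1 t*(s2 t*s3 t + r2 t*r3 t - b*r2 t/r3 t^3) + 2*s2 t*(-s1 t*s3 t + r1 t*r3 t + b*r1 t/r3 t^3)))
     + 4*k*r3 t^3*(s2 t*r1 t - s1 t*r2 t)) = 0)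
    by (rewrite <- E2; ring).
  pose proof (key b h k (s1 t) (s2 t) (s3 t) (r1 t) (r2 t) (r3 t) (y t) (x t) (dy t) (dx t)
     hb hr g' lL' hh kk hS2 hP2 E1' E2') as Ky.
  assert (Kx' : b * ((x t - y t) * dx t)^2 = - Wpoly b h k (x t)) by (unfold Wpoly; exact Kx).
  assert (Ky' : b * ((x t - y t) * dy t)^2 = - Wpoly b h k (y t))
    by (unfold Wpoly; rewrite <- Ky; ring).
  destruct (sign_lemma _ _ _ hb Kx') as [W1 [e [He Hx]]].
  destruct (sign_lemma _ _ _ hb Ky') as [W2 [e' [He' Hy]]].
  exists (- e), e'. repeat split; auto.
  - destruct He; subst; lra.
  - rewrite Hx at 1. ring.
Qed.
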